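(* Let $M,N\ge 0$ and let $u\le w$ be elements of the poset of shuffles $W_{MN}$. Then the interval $[u,w]=\{v\in W_{MN}: u\le v\le w\}$ is isomorphic (as a poset) to a product $W_{M_1N_1}\times W_{M_2N_2}\times\cdots\times W_{M_kN_k}$ of posets of shuffles, for suitable $k\ge 1$ and $M_p,N_p\ge 0$.
   Context: Let $\mathcal{A}=\{a_1,\dots,a_M\}$ (lower alphabet) and $\mathcal{X}=\{x_1,\dots,x_N\}$ (upper alphabet) be disjoint finite sets. A shuffle word is a word (possibly empty) with distinct letters from $\mathcal{A}\cup\mathcal{X}$ such that the letters from $\mathcal{A}$ occurring in it appear in increasing order of subscripts, and likewise for the letters from $\mathcal{X}$. The poset of shuffles $W_{MN}$ is the set of all shuffle words over $\mathcal{A},\mathcal{X}$, partially ordered as the reflexive-transitive closure of the covering relation: $w$ is covered by $w'$ iff $w'$ is obtained from $w$ either by deleting a letter belonging to $\mathcal{A}$ or by inserting a letter belonging to $\mathcal{X}$ (in a position such that the result is a shuffle word). Its minimum is $a_1a_2\cdots a_M$ and its maximum is $x_1x_2\cdots x_N$. *)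

(* Defs.v *)
From mathcomp Require Import all_boot.
From Stdlib Require Import Relations.
Set Implicit Arguments. Unset Strict Implicit. Unset Printing Implicit Defensive.

(* Letters: inl i is the lower letter a_{i+1} (i : 'I_M),
            inr j is the upper letter x_{j+1} (j : 'I_N). *)
Definition letter (M N : nat) : Type := ('I_M + 'I_N)%type.

Definition low_idx {M N} (l : letter M N) : option nat :=
  match l with inl i => Some (val i) | inr _ => None end.
Definition up_idx {M N} (l : letter M N) : option nat :=
  match l with inl _ => None | inr j => Some (val j) end.

Definition is_shuffle {M N} (w : seq (letter M N)) : bool :=
  [&& uniq w, sorted ltn (pmap low_idx w) & sorted ltn (pmap up_idx w)].

Definition W (M N : nat) := {w : seq (letter M N) | is_shuffle w}.

Definition shuffle_cover {M N} (w w' : seq (letter M N)) : Prop :=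
  (exists (s1 s2 : seq (letter M N)) (a : 'I_M),
      w = s1 ++ inl a :: s2 /\ w' = s1 ++ s2)
  \/ (exists (s1 s2 : seq (letter M N)) (x : 'I_N),
      w = s1 ++ s2 /\ w' = s1 ++ inr x :: s2 /\ is_shuffle w').

Definition shuffle_le {M N} (u v : W M N) : Prop :=
  clos_refl_trans (W M N) (fun a b => shuffle_cover (val a) (val b)) u v.

(* Main.v *)
Require Import Defs.
From Stdlib Require Import Relations ProofIrrelevance FunctionalExtensionality.
From mathcomp Require Import all_boot.
Set Implicit Arguments. Unset Strict Implicit. Unset Printing Implicit Defensive.

Section Split.
Variables (T : eqType) (P : pred T).
Fixpoint splitP (v : seq T) : seq (seq T) :=
  match v with
  | [::] => [:: [::]]
  | x :: v' => let r := splitP v' in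
      if P x then [::] :: r else (x :: head [::] r) :: behead r
  end.
Fixpoint join (s : seq T) (cs : seq (seq T)) : seq T :=
  match s, cs with
  | [::], _ => flatten cs
  | x :: s', [::] => x :: join s' [::]
  | x :: s', c :: cs' => c ++ x :: join s' cs'
  end.

Lemma splitPE v : splitP v = head [::] (splitP v) :: behead (splitP v).
Proof. by case: v => [|x v] //=; case: (P x). Qed.

Lemma size_splitP v : size (splitP v) = (count P v).+1.
Proof.
elim: v => [|x v IH] //=; case: (P x) => /=; first by rewrite IH.
by rewrite splitPE /= in IH *; rewrite IH add0n.
Qed.

Lemma flatten_splitP v : flatten (splitP v) = filter (predC P) v.
Proof.
elim: v => [|x v IH] //=; case: (P x) => //=.
by rewrite -IH [in RHS]splitPE.
Qed.

Lemma join_cons s x c r : join s ((x :: c) :: r) = x :: join s (c :: r).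
Proof. by case: s. Qed.

Lemma join_splitP v : join (filter P v) (splitP v) = v.
Proof.
elim: v => [|x v IH] //=; case: (P x) => //=; first by rewrite IH.
by rewrite join_cons -splitPE IH.
Qed.

Lemma splitP_noP c : ~~ has P c -> splitP c = [:: c].
Proof. by elim: c => [|x c IH] //= /norP [/negbTE -> /IH ->]. Qed.

Lemma splitP_cat_noP c y : ~~ has P c ->
  splitP (c ++ y) = (c ++ head [::] (splitP y)) :: behead (splitP y).
Proof.
elim: c => [|x c IH] /=; first by rewrite -splitPE.
by case/norP => /negbTE -> /IH ->.
Qed.

Lemma splitP_join s cs : all P s -> all (fun c => ~~ has P c) cs ->
  size cs = (size s).+1 -> splitP (join s cs) = cs.
Proof.
elim: s cs => [|x s IH] [|c cs] //=.
  by case: cs => // _ /andP [hc _] _; rewrite cats0 splitP_noP.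
case/andP=> Px Ps /andP [hc hcs] [hsz].
by rewrite splitP_cat_noP //= Px IH //= cats0.
Qed.

Lemma filter_join s cs : all P s -> all (fun c => ~~ has P c) cs ->
  filter P (join s cs) = s.
Proof.
have hf : forall cs0, all (fun c => ~~ has P c) cs0 -> filter P (flatten cs0) = [::].
  elim=> [|c cs0 IH] //= /andP [hc /IH]; rewrite filter_cat => ->.
  by move: hc; rewrite has_filter negbK => /eqP ->.
elim: s cs => [|x s IH] [|c cs] //=.
- by move=> _ h; apply: (hf (c :: cs)).
- by case/andP=> Px Ps _; rewrite Px IH.
case/andP=> Px Ps /andP [hc hcs]; rewrite filter_cat /= Px IH //.
by move: hc; rewrite has_filter negbK => /eqP ->.
Qed.

Lemma mem_join s cs x : (x \in join s cs) = (x \in s) || (x \in flatten cs).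
Proof.
elim: s cs => [|y s IH] [|c cs] //=; first by rewrite !inE IH orbA.
rewrite mem_cat !inE IH mem_cat.
by case: (x \in c); case: (x == y); case: (x \in s).
Qed.

Lemma splitP_filter (Q : pred T) v : {in v, forall x, P x -> Q x} ->
  splitP (filter Q v) = map (filter Q) (splitP v).
Proof.
elim: v => [|x v IH] //= h.
have IH' := IH (fun y hy => h y (@mem_behead _ (x :: v) _ hy)).
have hx := h x (mem_head _ _).
case Qx: (Q x) => /=; case Px: (P x) => /=.
- by rewrite IH'.
- by rewrite IH' [splitP v]splitPE /= Qx.
- by rewrite Px in hx; move: (hx erefl); rewrite Qx.
- by rewrite IH' [splitP v]splitPE /= Qx.
Qed.

Lemma mem_nth_flatten (cs : seq (seq T)) i x : x \in nth [::] cs i -> x \in flatten cs.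
Proof.
elim: cs i => [|c cs IH] [|i] //=; first by rewrite mem_cat => ->.
by rewrite mem_cat => /IH ->; rewrite orbT.
Qed.

Lemma mem_splitP v i x : x \in nth [::] (splitP v) i -> (x \in v) && ~~ P x.
Proof. by move/mem_nth_flatten; rewrite flatten_splitP mem_filter andbC. Qed.

Lemma splitP_noPs v : all (fun c => ~~ has P c) (splitP v).
Proof.
apply/allP=> c hc; apply/hasP=> [[x hx Px]].
have : x \in flatten (splitP v) by apply/flattenP; exists c.
by rewrite flatten_splitP mem_filter /= Px.
Qed.

Lemma uniq_flatten_nth (cs : seq (seq T)) i j x : uniq (flatten cs) ->
  x \in nth [::] cs i -> x \in nth [::] cs j -> i = j.
Proof.
elim: cs i j => [|c cs IH] [|i] [|j] //=; rewrite cat_uniq => /and3P [_ hd hu].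
- move=> hc /mem_nth_flatten hf; case/hasP: hd; by exists x.
- move=> /mem_nth_flatten hf hc; case/hasP: hd; by exists x.
- by move=> h1 h2; rewrite (IH i j hu h1 h2).
Qed.

Lemma uniq_flatten_from (cs : seq (seq T)) :
  (forall i, uniq (nth [::] cs i)) ->
  (forall i j x, x \in nth [::] cs i -> x \in nth [::] cs j -> i = j) ->
  uniq (flatten cs).
Proof.
elim: cs => [|c cs IH] //= hu hd; rewrite cat_uniq (hu 0) /=.
rewrite IH; last first.
- by move=> i j x h1 h2; have := hd i.+1 j.+1 x h1 h2; case.
- by move=> i; apply: (hu i.+1).
rewrite andbT; apply/hasP=> [[x /flattenP [c' hc' hx] hxc]].
case/(nthP [::]): hc' => i hi ei.
by have := hd 0 i.+1 x hxc; rewrite /= ei => /(_ hx).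
Qed.

Lemma pmap_subseq (U : eqType) (f : T -> option U) (x y : seq T) :
  subseq x y -> subseq (pmap f x) (pmap f y).
Proof.
case/subseqP=> m hm ->; elim: y m hm => [|b y IH] [|c m] //=.
case=> hm; case: c => /=.
- by case: (f b) => [a|] /=; [rewrite eqxx IH | apply: IH].
- by case: (f b) => [a|] /=; [apply: subseq_trans (IH _ hm) (subseq_cons _ _) | apply: IH].
Qed.
End Split.

Lemma mem_split (T : eqType) (x : T) s : x \in s -> exists s1 s2, s = s1 ++ x :: s2.
Proof. by case/splitPr=> s1 s2; exists s1, s2. Qed.

Lemma filterC (T : eqType) (a b : pred T) s : filter a (filter b s) = filter b (filter a s).
Proof. by rewrite -!filter_predI; apply: eq_filter => x /=; rewrite andbC. Qed.

Lemma shuffle_subseq M N (x y : seq (letter M N)) :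
  is_shuffle x -> subseq y x -> is_shuffle y.
Proof.
case/and3P=> ux sl su hs; apply/and3P; split.
- exact: subseq_uniq hs ux.
- exact (subseq_sorted ltn_trans (pmap_subseq low_idx hs) sl).
- exact (subseq_sorted ltn_trans (pmap_subseq up_idx hs) su).
Qed.

Section Char.
Variables M N : nat.
Notation Lt := (letter M N).
Definition islow (l : Lt) : bool := if l is inl _ then true else false.

Definition char (x y : seq Lt) : Prop :=
  [/\ forall l, islow l -> l \in y -> l \in x,
      forall l, ~~ islow l -> l \in x -> l \in y &
      filter [in y] x = filter [in x] y].

Lemma char_refl x : char x x.
Proof. by split. Qed.

Lemma char_trans x y z : char x y -> char y z -> char x z.
Proof.
case=> [h1 h2 h3] [g1 g2 g3].
have com : forall l, l \in x -> l \in z -> l \in y.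
  move=> l hx hz; case hl: (islow l); first exact: g1.
  by apply: h2 => //; rewrite hl.
split.
- by move=> l hl hz; apply: h1 => //; apply: g1.
- by move=> l hl hx; apply: g2 => //; apply: h2.
have e1 : filter [in z] x = filter [in z] (filter [in y] x).
  rewrite -filter_predI; apply: eq_in_filter => l hl /=.
  by case hz: (l \in z) => //=; rewrite (com l hl hz).
have e2 : filter [in x] z = filter [in x] (filter [in y] z).
  rewrite -filter_predI; apply: eq_in_filter => l hl /=.
  by case hx: (l \in x) => //=; rewrite (com l hx hl).
by rewrite e1 h3 filterC g3 -e2.
Qed.

Lemma char_sub1 x y : uniq x -> subseq y x ->
  (forall l, l \in x -> l \notin y -> islow l) -> char x y.
Proof.
move=> ux hs hl; split.
- by move=> l _ ly; exact: (mem_subseq hs ly).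
- move=> l nl lx; apply/negPn/negP=> ly; by rewrite (hl l lx ly) in nl.
have e : y = filter [in y] x by apply/subseq_uniqP.
rewrite -e; apply/esym/all_filterP/allP=> l ly.
exact: (mem_subseq hs ly).
Qed.

Lemma char_sub2 x y : uniq y -> subseq x y ->
  (forall l, l \in y -> l \notin x -> ~~ islow l) -> char x y.
Proof.
move=> uy hs hl; split.
- move=> l nl ly; apply/negPn/negP=> lx; by rewrite (negbTE (hl l ly lx)) in nl.
- by move=> l _ ly; exact: (mem_subseq hs ly).
have e : x = filter [in x] y by apply/subseq_uniqP.
rewrite -e; apply/all_filterP/allP=> l ly.
exact: (mem_subseq hs ly).
Qed.

Lemma cover_char (x y : seq Lt) : is_shuffle x -> is_shuffle y ->
  shuffle_cover x y -> char x y.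
Proof.
case/and3P=> ux _ _; case/and3P=> uy _ _.
case=> [[s1 [s2 [a [ex ey]]]] | [s1 [s2 [b [ex [ey _]]]]]]; subst x y.
- apply: char_sub1 => //.
    by apply: cat_subseq; [apply: subseq_refl | apply: subseq_cons].
  move=> l; rewrite !mem_cat inE; case: eqP => [-> //|] /= _.
  by case: (l \in s1) => //= ->.
- apply: char_sub2 => //.
    by apply: cat_subseq; [apply: subseq_refl | apply: subseq_cons].
  move=> l; rewrite !mem_cat inE; case: eqP => [-> //|] /= _.
  by case: (l \in s1) => //= ->.
Qed.

Lemma le_char (a b : W M N) : shuffle_le a b -> char (val a) (val b).
Proof.
elim=> [x y h | x | x y z _ h1 _ h2].
- exact: cover_char (valP x) (valP y) h.
- exact: char_refl.
- exact: char_trans h1 h2.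
Qed.

Lemma count0_filter (Q : pred Lt) s : count (predC Q) s = 0 -> filter Q s = s.
Proof.
move=> h; apply/all_filterP/allP=> l hl; apply/negPn/negP=> nq.
have : 0 < count (predC Q) s by rewrite -has_count; apply/hasP; exists l.
by rewrite h.
Qed.

Lemma filter_notin (T : eqType) (l : T) s : l \notin s -> filter (predC1 l) s = s.
Proof.
move=> h; apply/all_filterP/allP=> m hm /=; apply/eqP=> e; by rewrite -e hm in h.
Qed.

Lemma del_le n (a b : W M N) (Q : pred Lt) : count (predC Q) (val a) = n ->
  val b = filter Q (val a) -> (forall l, l \in val a -> ~~ Q l -> islow l) ->
  shuffle_le a b.
Proof.
elim: n a => [|n IH] a hc hb hl.
  have -> : a = b by apply: val_inj; rewrite hb count0_filter.
  exact: rt_refl.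
have : has (predC Q) (val a) by rewrite has_count hc.
case/hasP=> l la /= nQ.
have ua : uniq (val a) by case/and3P: (valP a).
case: (mem_split la) => s1 [s2 ea].
have sh1 : is_shuffle (s1 ++ s2).
  apply: shuffle_subseq (valP a) _; rewrite ea.
  by apply: cat_subseq; [apply: subseq_refl | apply: subseq_cons].
pose a1 : W M N := exist (fun w => is_shuffle w) _ sh1.
apply: (@rt_trans _ _ a a1 b).
  apply: rt_step; left; move: (hl l la nQ); case: l la nQ ea => // i _ _ ea _.
  by exists s1, s2, i.
apply: (IH a1) => /=.
- by move: hc; rewrite ea !count_cat /= nQ addnS; case.
- by rewrite hb ea !filter_cat /= (negbTE nQ).
- move=> m hm; apply: hl; rewrite ea; move: hm; rewrite !mem_cat inE.
  by case/orP=> ->; rewrite ?orbT.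
Qed.

Lemma ins_le n (a b : W M N) (Q : pred Lt) : count (predC Q) (val b) = n ->
  val a = filter Q (val b) -> (forall l, l \in val b -> ~~ Q l -> ~~ islow l) ->
  shuffle_le a b.
Proof.
elim: n a b Q => [|n IH] a b Q hc ha hl.
  have -> : a = b by apply: val_inj; rewrite ha count0_filter.
  exact: rt_refl.
have : has (predC Q) (val b) by rewrite has_count hc.
case/hasP=> l lb /= nQ.
have ub : uniq (val b) by case/and3P: (valP b).
case: (mem_split lb) => s1 [s2 eb].
move: (hl l lb nQ); case: l lb nQ eb => // j lb nQ eb _.
have [l1 l2] : (inr j) \notin s1 /\ (inr j) \notin s2.
  move: ub; rewrite eb cat_uniq => /and3P [_ hh /andP [h2 _]]; split => //.
  by apply: contra hh => h; apply/hasP; exists (inr j); rewrite ?mem_head.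
pose Q' := predU1 (inr j) Q.
have f1 : filter Q' s1 = filter Q s1.
  apply: eq_in_filter => m hm /=; case: eqP => // e; by rewrite -e hm in l1.
have f2 : filter Q' s2 = filter Q s2.
  apply: eq_in_filter => m hm /=; case: eqP => // e; by rewrite -e hm in l2.
have sh1 : is_shuffle (filter Q' (val b)).
  by apply: shuffle_subseq (valP b) _; apply: filter_subseq.
pose a1 : W M N := exist (fun w => is_shuffle w) _ sh1.
apply: (@rt_trans _ _ a a1 b).
  apply: rt_step; right.
  exists (filter Q s1), (filter Q s2), j; split.
  - by rewrite ha eb filter_cat /= (negbTE nQ).
  split; last exact: sh1.
  by rewrite /= eb filter_cat /= eqxx f1 f2.
apply: (IH a1 b Q') => //.
- rewrite [val b]eb in hc *; move: hc; rewrite !count_cat /= eqxx nQ /= add0n addnS; case=> <-.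
  by congr (_ + _); apply: eq_in_count => m hm /=; case: eqP => // e;
    [ rewrite -e hm in l1 | rewrite -e hm in l2 ].
- move=> m hm /norP [_ h]; exact: hl.
Qed.

Lemma char_le (a b : W M N) : char (val a) (val b) -> shuffle_le a b.
Proof.
case=> h1 h2 h3.
have sh : is_shuffle (filter [in val b] (val a)).
  by apply: shuffle_subseq (valP a) _; apply: filter_subseq.
pose m : W M N := exist (fun w => is_shuffle w) _ sh.
apply: (@rt_trans _ _ a m b).
- apply: (@del_le _ a m [in val b] erefl erefl) => l la /= nb.
  by apply/negPn/negP=> nl; rewrite (h2 l nl la) in nb.
- apply: (@ins_le _ m b [in val a] erefl h3) => l lb /= na.
  by apply/negP=> nl; rewrite (h1 l nl lb) in na.
Qed.

Lemma le_charE (a b : W M N) : shuffle_le a b <-> char (val a) (val b).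
Proof. by split; [apply: le_char | apply: char_le]. Qed.
End Char.
Arguments islow {M N}.
Arguments char {M N}.

Lemma R3 (T : eqType) (x0 : T) (L : seq T) (idx : seq nat) : uniq L ->
  all (fun i => i < size L) idx -> sorted ltn idx = subseq (map (nth x0 L) idx) L.
Proof.
move=> uL hi; set x := map (nth x0 L) idx.
have ei : map (index^~ L) x = idx.
  rewrite -map_comp -[RHS]map_id; apply/eq_in_map => i hi' /=.
  exact: index_uniq (allP hi i hi') uL.
have tr : transitive (relpre (index^~ L) ltn).
  by move=> b a c /= h1 h2; apply: ltn_trans h1 h2.
have sL : sorted (relpre (index^~ L) ltn) L.
  rewrite -sorted_map.
  have -> : map (index^~ L) L = iota 0 (size L).
    transitivity (map (index^~ L) (map (nth x0 L) (iota 0 (size L)))).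
      by rewrite map_nth_iota0 // take_size.
    rewrite -map_comp -[RHS]map_id.
    apply/eq_in_map => i; rewrite mem_iota add0n /= => hi'.
    exact: index_uniq.
  exact: iota_ltn_sorted.
rewrite -{1}ei sorted_map; apply/idP/idP => [sx|sub]; last exact (subseq_sorted tr sub sL).
have ux : uniq x by apply: sorted_uniq tr _ _ sx => p; apply: ltnn.
have xL : {subset x <= L} by move=> p /mapP [i hi' ->]; apply: mem_nth; apply: (allP hi).
apply/subseq_uniqP => //; apply: (sorted_eq tr) => //.
- move=> p q /andP [/= h1 h2]; have := ltn_trans h1 h2; by rewrite ltnn.
- exact (sorted_filter tr _ sL).
apply: uniq_perm => //; first exact: filter_uniq.
by move=> p; rewrite mem_filter; case hp: (p \in x) => //=; rewrite (xL p hp).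
Qed.

Section Relabel.
Variables (M N : nat) (L X : seq (letter M N)).
Hypotheses (uL : uniq L) (uX : uniq X) (lowL : all islow L) (upX : all (predC islow) X).

Definition dec (l : letter (size L) (size X)) : letter M N :=
  match l with inl j => tnth (in_tuple L) j | inr j => tnth (in_tuple X) j end.
Definition enc (l : letter M N) : option (letter (size L) (size X)) :=
  match l with
  | inl _ => omap inl (insub (index l L) : option 'I_(size L))
  | inr _ => omap inr (insub (index l X) : option 'I_(size X))
  end.
Definition lowo (l : letter (size L) (size X)) : option 'I_(size L) :=
  if l is inl j then Some j else None.
Definition upo (l : letter (size L) (size X)) : option 'I_(size X) :=
  if l is inr j then Some j else None.

Definition valid (c : seq (letter M N)) : Prop :=
  [/\ uniq c, {subset c <= L ++ X}, subseq (filter islow c) L &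
      subseq (filter (predC islow) c) X].

Lemma islow_dec l : islow (dec l) = islow l.
Proof.
case: l => j /=.
- exact: (allP lowL _ (mem_tnth j (in_tuple L))).
- exact: negbTE (allP upX _ (mem_tnth j (in_tuple X))).
Qed.

Lemma dec_in l : dec l \in L ++ X.
Proof. by rewrite mem_cat; case: l => j /=; rewrite mem_tnth ?orbT. Qed.

Lemma dec_inj : injective dec.
Proof.
move=> [i|i] [j|j] e.
- congr inl; apply: val_inj => /=.
  have [x0 _] : exists x0 : letter M N, True by exists (tnth (in_tuple L) i).
  move: e => /= /(congr1 (index^~ L)); rewrite !(tnth_nth x0).
  by rewrite !index_uniq.
- by move: (islow_dec (inl i)); rewrite e islow_dec.
- by move: (islow_dec (inr i)); rewrite e islow_dec.
- congr inr; apply: val_inj => /=.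
  have [x0 _] : exists x0 : letter M N, True by exists (tnth (in_tuple X) i).
  move: e => /= /(congr1 (index^~ X)); rewrite !(tnth_nth x0).
  by rewrite !index_uniq.
Qed.

Lemma encK : pcancel dec enc.
Proof.
move=> l; have hl := islow_dec l.
case e: (dec l) => [i|i] /= in hl *.
- case: l e hl => // j e _.
  have h : index (inl i) L = j.
    by rewrite -e /= (tnth_nth (inl i)) index_uniq.
  by rewrite h valK.
- case: l e hl => // j e _.
  have h : index (inr i) X = j.
    by rewrite -e /= (tnth_nth (inr i)) index_uniq.
  by rewrite h valK.
Qed.

Lemma decK l : l \in L ++ X -> omap dec (enc l) = Some l.
Proof.
rewrite mem_cat; case: l => i /= h.
- have hL : inl i \in L.
    case/orP: h => // h; by move: (allP upX _ h).
  rewrite insubT ?index_mem //= => hi; congr Some.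
  by rewrite (tnth_nth (inl i)) /= nth_index.
- have hX : inr i \in X.
    case/orP: h => // h; by move: (allP lowL _ h).
  rewrite insubT ?index_mem //= => hi; congr Some.
  by rewrite (tnth_nth (inr i)) /= nth_index.
Qed.

Lemma map_dec_enc c : {subset c <= L ++ X} -> map dec (pmap enc c) = c.
Proof.
elim: c => [|x c IH] //= h.
have := decK (h x (mem_head _ _)); case: (enc x) => //= y [->].
by rewrite IH // => z hz; apply: h; rewrite inE hz orbT.
Qed.

Lemma pmap_enc_dec y : pmap enc (map dec y) = y.
Proof. exact: (map_pK encK). Qed.

Lemma mem_map_dec y l : (dec l \in map dec y) = (l \in y).
Proof. exact: (mem_map dec_inj). Qed.

Lemma char_dec y y' : char (map dec y) (map dec y') <-> char y y'.
Proof.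
have ef : forall y1 y2, filter [in map dec y2] (map dec y1) = map dec (filter [in y2] y1).
  move=> y1 y2; rewrite filter_map; congr map; apply: eq_filter => l /=.
  exact: mem_map_dec.
split; case=> h1 h2 h3; split.
- by move=> l hl; have := h1 (dec l); rewrite islow_dec !mem_map_dec; apply.
- by move=> l hl; have := h2 (dec l); rewrite islow_dec !mem_map_dec; apply.
- by apply: (inj_map dec_inj); rewrite -!ef.
- move=> l hl /mapP [l0 hl0 el]; subst l; rewrite mem_map_dec; apply: h1 => //;
  by rewrite -islow_dec.
- move=> l hl /mapP [l0 hl0 el]; subst l; rewrite mem_map_dec; apply: h2 => //;
  by rewrite -islow_dec.
- by rewrite !ef h3.
Qed.

Lemma low_dec y : filter islow (map dec y) = map (tnth (in_tuple L)) (pmap lowo y).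
Proof.
elim: y => [|l y IH] //=; rewrite islow_dec; case: l => j //=; by rewrite IH.
Qed.

Lemma up_dec y : filter (predC islow) (map dec y) = map (tnth (in_tuple X)) (pmap upo y).
Proof.
elim: y => [|l y IH] //=; rewrite islow_dec; case: l => j //=; by rewrite IH.
Qed.

Lemma low_idx_lowo y : pmap low_idx y = map val (pmap lowo y).
Proof. by elim: y => [|[j|j] y IH] //=; rewrite IH. Qed.

Lemma up_idx_upo y : pmap up_idx y = map val (pmap upo y).
Proof. by elim: y => [|[j|j] y IH] //=; rewrite IH. Qed.

Lemma R3t (T : eqType) (t : seq T) (js : seq 'I_(size t)) : uniq t ->
  sorted ltn (map val js) = subseq (map (tnth (in_tuple t)) js) t.
Proof.
case: js => [|j js] ut; first by rewrite /= sub0seq.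
rewrite (R3 (tnth (in_tuple t) j) ut).
- congr subseq; rewrite -map_comp; apply: eq_map => i /=.
  by rewrite [RHS](tnth_nth (tnth (in_tuple t) j)).
- apply/allP => i /mapP [i0 _ ->]; exact: ltn_ord.
Qed.

Lemma dec_valid (y : seq (letter (size L) (size X))) : is_shuffle y -> valid (map dec y).
Proof.
case/and3P=> uy sl su; split.
- by rewrite map_inj_uniq //; apply: dec_inj.
- by move=> l /mapP [l0 _ ->]; apply: dec_in.
- by rewrite low_dec -R3t // -low_idx_lowo.
- by rewrite up_dec -R3t // -up_idx_upo.
Qed.

Lemma enc_shuffle c : valid c -> is_shuffle (pmap enc c).
Proof.
case=> uc sc sl su; have e := map_dec_enc sc.
apply/and3P; split.
- by rewrite -(map_inj_uniq dec_inj) e.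
- by rewrite low_idx_lowo R3t // -low_dec e.
- by rewrite up_idx_upo R3t // -up_dec e.
Qed.
End Relabel.

Lemma uniq_nth_flatten (T : eqType) (cs : seq (seq T)) i :
  uniq (flatten cs) -> uniq (nth [::] cs i).
Proof.
elim: cs i => [|c cs IH] [|i] //=; rewrite cat_uniq => /and3P [h1 _ h3] //.
exact: IH.
Qed.

Lemma nth_map_filter (T : eqType) (a : pred T) (cs : seq (seq T)) i :
  nth [::] (map (filter a) cs) i = filter a (nth [::] cs i).
Proof. by elim: cs i => [|c cs IH] [|i] //=. Qed.

Lemma uniq_by_filter (T : eqType) (a : pred T) s :
  uniq (filter a s) -> uniq (filter (predC a) s) -> uniq s.
Proof.
elim: s => [|x s IH] //=; case ax: (a x) => /=.
- case/andP=> nx u1 u2; rewrite IH // andbT; apply: contra nx => xs.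
  by rewrite mem_filter ax.
- move=> u1 /andP [nx u2]; rewrite IH // andbT; apply: contra nx => xs.
  by rewrite mem_filter /= ax.
Qed.

Lemma splitP_inj (T : eqType) (P : pred T) x y :
  filter P x = filter P y -> splitP P x = splitP P y -> x = y.
Proof. by move=> h1 h2; rewrite -(join_splitP P x) -(join_splitP P y) h1 h2. Qed.

Lemma nth_map_enum (T : Type) (x0 : T) k (F : 'I_k -> T) (i : 'I_k) :
  nth x0 (map F (enum 'I_k)) i = F i.
Proof.
rewrite (nth_map i) ?size_enum_ord //; congr F; apply: val_inj.
by rewrite /= nth_enum_ord.
Qed.

Lemma map_nth_enum (T : Type) (x0 : T) k (cs : seq T) :
  size cs = k -> map (fun i : 'I_k => nth x0 cs i) (enum 'I_k) = cs.
Proof.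
move=> hs; apply: (@eq_from_nth _ x0); first by rewrite size_map size_enum_ord.
move=> j; rewrite size_map size_enum_ord => hj.
by rewrite (nth_map_enum x0 (fun i : 'I_k => nth x0 cs i) (Ordinal hj)).
Qed.

Lemma pmap_low_filter M N (a : pred (letter M N)) x :
  {in x, forall l, islow l -> a l} -> pmap low_idx (filter a x) = pmap low_idx x.
Proof.
elim: x => [|l x IH] //= h; rewrite -IH; last by move=> m hm; apply: h; rewrite inE hm orbT.
case al: (a l) => //=; case: l h al => //= i h al.
by rewrite h ?mem_head in al.
Qed.

Lemma pmap_up_filter M N (a : pred (letter M N)) x :
  {in x, forall l, ~~ islow l -> a l} -> pmap up_idx (filter a x) = pmap up_idx x.
Proof.
elim: x => [|l x IH] //= h; rewrite -IH; last by move=> m hm; apply: h; rewrite inE hm orbT.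
case al: (a l) => //=; case: l h al => //= i h al.
by rewrite h ?mem_head in al.
Qed.

Lemma shuffle_between M N (u v w : seq (letter M N)) :
  is_shuffle u -> is_shuffle w -> uniq v -> char u v -> char v w -> is_shuffle v.
Proof.
case/and3P=> _ su _; case/and3P=> _ _ sw uv [h1 _ h3] [_ g2 g3].
apply/and3P; split => //.
- rewrite -(pmap_low_filter (a := [in u])) //; last by move=> l lv ll; apply: h1.
  rewrite -h3; exact (subseq_sorted ltn_trans (pmap_subseq low_idx (filter_subseq _ _)) su).
- rewrite -(pmap_up_filter (a := [in w])) //; last by move=> l lv ll; apply: g2.
  rewrite g3; exact (subseq_sorted ltn_trans (pmap_subseq up_idx (filter_subseq _ _)) sw).
Qed.

Section Main.
Variables (M N : nat) (uW wW : W M N).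
Hypothesis huw : char (val uW) (val wW).
Local Notation u := (val uW).
Local Notation w := (val wW).
Local Notation Lt := (letter M N).

Definition s0 : seq Lt := filter [in w] u.
Definition P0 : pred Lt := fun l => l \in s0.
Definition k := (size s0).+1.
Definition cu := splitP P0 u.
Definition cw := splitP P0 w.
Definition Lc (i : nat) := nth [::] cu i.
Definition Xc (i : nat) := nth [::] cw i.

Lemma uniq_u : uniq u. Proof. by case/and3P: (valP uW). Qed.
Lemma uniq_w : uniq w. Proof. by case/and3P: (valP wW). Qed.

Lemma mem_s0 l : (l \in s0) = (l \in u) && (l \in w).
Proof. by rewrite mem_filter andbC. Qed.

Lemma filter_P0_u : filter P0 u = s0.
Proof. by apply: eq_in_filter => l lu; rewrite /P0 mem_s0 lu. Qed.

Lemma filter_P0_w : filter P0 w = s0.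
Proof.
transitivity (filter [in u] w).
  by apply: eq_in_filter => l lw; rewrite /P0 mem_s0 lw andbT.
by case: huw => _ _ <-.
Qed.

Lemma Lc_mem i l : l \in Lc i -> [/\ l \in u, l \notin w & islow l].
Proof.
move=> H; case/andP: (mem_splitP H) => lu; rewrite /P0 mem_s0 lu /= => nw.
split => //; case: huw => _ h2 _; apply/negPn/negP => nl.
by rewrite (h2 l nl lu) in nw.
Qed.

Lemma Xc_mem i l : l \in Xc i -> [/\ l \in w, l \notin u & ~~ islow l].
Proof.
move=> H; case/andP: (mem_splitP H) => lw; rewrite /P0 mem_s0 lw andbT => nu.
split => //; case: huw => h1 _ _; apply/negP => ll.
by rewrite (h1 l ll lw) in nu.
Qed.

Lemma Lc_uniq i : uniq (Lc i).
Proof. by apply: uniq_nth_flatten; rewrite /cu flatten_splitP filter_uniq // uniq_u. Qed.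
Lemma Xc_uniq i : uniq (Xc i).
Proof. by apply: uniq_nth_flatten; rewrite /cw flatten_splitP filter_uniq // uniq_w. Qed.
Lemma Lc_low i : all islow (Lc i).
Proof. by apply/allP => l /Lc_mem []. Qed.
Lemma Xc_up i : all (predC islow) (Xc i).
Proof. by apply/allP => l /Xc_mem []. Qed.
Lemma Lc_disj i j l : l \in Lc i -> l \in Lc j -> i = j.
Proof. by apply: uniq_flatten_nth; rewrite /cu flatten_splitP filter_uniq // uniq_u. Qed.
Lemma Xc_disj i j l : l \in Xc i -> l \in Xc j -> i = j.
Proof. by apply: uniq_flatten_nth; rewrite /cw flatten_splitP filter_uniq // uniq_w. Qed.

Definition inI (v : seq Lt) := [/\ uniq v, char u v & char v w].
Definition cv (v : seq Lt) := splitP P0 v.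

Section V.
Variables (v : seq Lt) (hv : inI v).

Lemma s0_sub_v : {subset s0 <= v}.
Proof.
case: hv => _ [_ h2 _] [g1 _ _] l; rewrite mem_s0 => /andP [lu lw].
case hl: (islow l); first exact: g1.
by apply: h2 => //; rewrite hl.
Qed.

Lemma filter_P0_v : filter P0 v = s0.
Proof.
case: hv => _ [h1 _ h3] _.
transitivity (filter P0 (filter [in u] v)).
  rewrite -filter_predI; apply: eq_in_filter => l lv /=.
  by case hl: (P0 l) => //=; move: hl; rewrite /P0 mem_s0 => /andP [].
rewrite -h3 filterC filter_P0_u; apply/all_filterP/allP => l; exact: s0_sub_v.
Qed.

Lemma size_cv : size (cv v) = k.
Proof. by rewrite size_splitP -size_filter filter_P0_v. Qed.

Lemma cv_L i : filter [in v] (Lc i) = filter [in u] (nth [::] (cv v) i).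
Proof.
case: hv => _ [_ _ h3] _.
have := congr1 (splitP P0) h3; rewrite !splitP_filter => [e||].
- by have := congr1 (fun cs => nth [::] cs i) e; rewrite !nth_map_filter.
- by move=> l lv; rewrite /P0 mem_s0 => /andP [].
- by move=> l lu hp; apply: s0_sub_v.
Qed.

Lemma cv_X i : filter [in w] (nth [::] (cv v) i) = filter [in v] (Xc i).
Proof.
case: hv => _ _ [_ _ h3].
have := congr1 (splitP P0) h3; rewrite !splitP_filter => [e||].
- by have := congr1 (fun cs => nth [::] cs i) e; rewrite !nth_map_filter.
- by move=> l lw hp; apply: s0_sub_v.
- by move=> l lv; rewrite /P0 mem_s0 => /andP [].
Qed.

Lemma cv_mem i l : l \in nth [::] (cv v) i ->
  [/\ l \in v, ~~ P0 l & (if islow l then l \in Lc i else l \in Xc i)].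
Proof.
move=> H; case/andP: (mem_splitP H) => lv np; split => //.
case: hv => _ [h1 _ _] [_ g2 _]; case hl: (islow l).
- have lu : l \in u by apply: h1.
  have : l \in filter [in u] (nth [::] (cv v) i) by rewrite mem_filter lu H.
  by rewrite -cv_L mem_filter => /andP [].
- have lw : l \in w by apply: g2 => //; rewrite hl.
  have : l \in filter [in w] (nth [::] (cv v) i) by rewrite mem_filter lw H.
  by rewrite cv_X mem_filter => /andP [].
Qed.

Lemma cv_sub i : {subset nth [::] (cv v) i <= v}.
Proof. by move=> l /cv_mem []. Qed.

Lemma v_mem l : l \in v -> ~~ P0 l -> exists2 i, i < k & l \in nth [::] (cv v) i.
Proof.
move=> lv np.
have : l \in flatten (cv v) by rewrite /cv flatten_splitP mem_filter /= np lv.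
case/flattenP => c hc lc; case/(nthP [::]): hc => i hi e.
by exists i; [rewrite -size_cv | rewrite e].
Qed.

Lemma cv_valid i : valid (Lc i) (Xc i) (nth [::] (cv v) i).
Proof.
split.
- by apply: uniq_nth_flatten; rewrite /cv flatten_splitP filter_uniq //; case: hv.
- move=> l H; rewrite mem_cat; case: (cv_mem H) => _ _; case: (islow l) => ->; by rewrite ?orbT.
- have -> : filter islow (nth [::] (cv v) i) = filter [in u] (nth [::] (cv v) i).
    apply: eq_in_filter => l H; case: (cv_mem H) => _ _; case hl: (islow l).
    + by case/Lc_mem.
    + by case/Xc_mem => _ /negbTE ->.
  by rewrite -cv_L filter_subseq.
- have -> : filter (predC islow) (nth [::] (cv v) i) = filter [in w] (nth [::] (cv v) i).
    apply: eq_in_filter => l H; case: (cv_mem H) => _ _; case hl: (islow l) => /=.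
    + by case/Lc_mem => _ /negbTE ->; rewrite hl.
    + by case/Xc_mem => ->; rewrite hl.
  by rewrite cv_X filter_subseq.
Qed.
End V.

Lemma cv_loc v v' (hv : inI v) (hv' : inI v') i j l :
  l \in nth [::] (cv v) i -> l \in nth [::] (cv v') j -> i = j.
Proof.
move=> H1 H2; case: (cv_mem hv H1) => _ _; case: (cv_mem hv' H2) => _ _.
by case: (islow l) => h2 h1; [apply: (Lc_disj h1 h2) | apply: (Xc_disj h1 h2)].
Qed.

Lemma loc_filter v v' (hv : inI v) (hv' : inI v') i :
  filter [in v'] (nth [::] (cv v) i) = filter [in nth [::] (cv v') i] (nth [::] (cv v) i).
Proof.
apply: eq_in_filter => l H /=; apply/idP/idP; last exact: (cv_sub hv').
move=> lv'; case: (cv_mem hv H) => _ np _.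
case: (v_mem hv' lv' np) => j _ hj.
by rewrite (cv_loc hv hv' H hj).
Qed.

Lemma char_comp v v' (hv : inI v) (hv' : inI v') :
  char v v' <-> forall i : 'I_k, char (nth [::] (cv v) i) (nth [::] (cv v') i).
Proof.
split.
- case=> h1 h2 h3 i; split.
  + move=> l ll H'; have lv := h1 _ ll (cv_sub hv' H').
    case: (cv_mem hv' H') => _ np _; case: (v_mem hv lv np) => j _ hj.
    by rewrite (cv_loc hv' hv H' hj).
  + move=> l ll H; have lv' := h2 _ ll (cv_sub hv H).
    case: (cv_mem hv H) => _ np _; case: (v_mem hv' lv' np) => j _ hj.
    by rewrite (cv_loc hv hv' H hj).
  + rewrite -(loc_filter hv hv') -(loc_filter hv' hv).
    have := congr1 (splitP P0) h3; rewrite !splitP_filter => [e||].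
    * by have := congr1 (fun cs => nth [::] cs i) e; rewrite !nth_map_filter.
    * by move=> l _ hp; apply: (s0_sub_v hv).
    * by move=> l _ hp; apply: (s0_sub_v hv').
- move=> hc; split.
  + move=> l ll lv'; case Pl: (P0 l); first by apply: (s0_sub_v hv); exact: Pl.
    case: (v_mem hv' lv' (negbT Pl)) => i hi H'.
    have [c1 _ _] := hc (Ordinal hi).
    exact: (cv_sub hv (c1 l ll H')).
  + move=> l ll lv; case Pl: (P0 l); first by apply: (s0_sub_v hv'); exact: Pl.
    case: (v_mem hv lv (negbT Pl)) => i hi H.
    have [_ c2 _] := hc (Ordinal hi).
    exact: (cv_sub hv' (c2 l ll H)).
  + apply: (splitP_inj (P := P0)).
      rewrite filterC (filter_P0_v hv) filterC (filter_P0_v hv').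
      have e1 : filter [in v'] s0 = s0 by apply/all_filterP/allP => l; apply: s0_sub_v.
      have e2 : filter [in v] s0 = s0 by apply/all_filterP/allP => l; apply: s0_sub_v.
      by rewrite e1 e2.
    rewrite !splitP_filter; last first.
    1,2: by move=> l _ hp; first [exact: (s0_sub_v hv hp) | exact: (s0_sub_v hv' hp)].
    apply: (@eq_from_nth _ [::]); first by rewrite !size_map (size_cv hv) (size_cv hv').
    move=> j; rewrite size_map (size_cv hv) => hj.
    rewrite !nth_map_filter (loc_filter hv hv') (loc_filter hv' hv).
    by case: (hc (Ordinal hj)).
Qed.

Section Construct.
Variables (cs : seq (seq Lt)) (hsz : size cs = k)
  (hval : forall i : 'I_k, valid (Lc i) (Xc i) (nth [::] cs i)).

Lemma cs_mem i l : l \in nth [::] cs i -> if islow l then l \in Lc i else l \in Xc i.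
Proof.
case: (ltnP i k) => hi; last by rewrite nth_default ?hsz.
case: (hval (Ordinal hi)) => _ sub _ _ H; move: (sub l H); rewrite mem_cat /=.
case hl: (islow l); case/orP => // h.
- by case: (Xc_mem h) => _ _; rewrite hl.
- by case: (Lc_mem h) => _ _; rewrite hl.
Qed.

Lemma cs_notP i l : l \in nth [::] cs i -> ~~ P0 l.
Proof.
move/cs_mem; rewrite /P0 mem_s0; case: (islow l).
- by case/Lc_mem => _ /negbTE ->; rewrite andbF.
- by case/Xc_mem => _ /negbTE ->.
Qed.

Lemma cs_loc i j l : l \in nth [::] cs i -> l \in nth [::] cs j -> i = j.
Proof.
move=> /cs_mem h1 /cs_mem h2; move: h1 h2.
by case: (islow l) => h1 h2; [apply: (Lc_disj h1 h2) | apply: (Xc_disj h1 h2)].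
Qed.

Definition vj := join s0 cs.

Lemma all_s0 : all P0 s0. Proof. by apply/allP. Qed.

Lemma cs_noP : all (fun c => ~~ has P0 c) cs.
Proof.
apply/allP => c hc; case/(nthP [::]): hc => i _ e.
apply/hasP => [[l hl Pl]]; rewrite -e in hl.
by rewrite (negbTE (cs_notP hl)) in Pl.
Qed.

Lemma split_vj : splitP P0 vj = cs.
Proof. by rewrite /vj splitP_join ?all_s0 ?cs_noP. Qed.

Lemma filter_vj : filter P0 vj = s0.
Proof. by rewrite /vj filter_join ?all_s0 ?cs_noP. Qed.

Lemma vj_cs i : {subset nth [::] cs i <= vj}.
Proof. by move=> l H; rewrite /vj mem_join (mem_nth_flatten H) orbT. Qed.

Lemma s0_vj : {subset s0 <= vj}.
Proof. by move=> l H; rewrite /vj mem_join H. Qed.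

Lemma vj_mem l : l \in vj -> ~~ P0 l -> exists i, l \in nth [::] cs i.
Proof.
rewrite /vj mem_join => /orP [h|h] np; first by rewrite /P0 h in np.
case/flattenP: h => c hc lc; case/(nthP [::]): hc => i _ e.
by exists i; rewrite e.
Qed.

Lemma uniq_vj : uniq vj.
Proof.
apply: (uniq_by_filter (a := P0)).
  by rewrite filter_vj /s0 filter_uniq // uniq_u.
rewrite -flatten_splitP split_vj; apply: uniq_flatten_from; last exact: cs_loc.
move=> i; case: (ltnP i k) => hi; last by rewrite nth_default ?hsz.
by case: (hval (Ordinal hi)).
Qed.

Lemma char_u_vj : char u vj.
Proof.
split.
- move=> l ll lv; case Pl: (P0 l); first by move: Pl; rewrite /P0 mem_s0 => /andP [].
  case: (vj_mem lv (negbT Pl)) => i /cs_mem; rewrite ll; by case/Lc_mem.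
- move=> l ll lu; apply: s0_vj; rewrite mem_s0 lu /=.
  by case: huw => _ h2 _; apply: h2.
apply: (splitP_inj (P := P0)).
  rewrite filterC filter_P0_u filterC filter_vj.
  have e1 : filter [in vj] s0 = s0 by apply/all_filterP/allP => l; apply: s0_vj.
  have e2 : filter [in u] s0 = s0.
    by apply/all_filterP/allP => l; rewrite mem_s0 => /andP [].
  by rewrite e1 e2.
rewrite !splitP_filter; last first.
1,2: by move=> l _ hp; first [exact: (s0_vj hp) | by move: hp; rewrite /P0 mem_s0 => /andP []].
rewrite split_vj; apply: (@eq_from_nth _ [::]); first by rewrite !size_map /cu size_splitP -size_filter filter_P0_u hsz.
move=> j; rewrite size_map /cu size_splitP -size_filter filter_P0_u => hj.
rewrite !nth_map_filter.
have [_ _ sub _] := hval (Ordinal hj).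
transitivity (filter [in nth [::] cs j] (Lc j)).
  apply: eq_in_filter => l hl; apply/idP/idP; last exact: vj_cs.
  move=> lv; case: (Lc_mem hl) => _ nw ll.
  have np : ~~ P0 l by rewrite /P0 mem_s0 (negbTE nw) andbF.
  case: (vj_mem lv np) => i H; move: (cs_mem H); rewrite ll => hi.
  by rewrite -(Lc_disj hi hl).
transitivity (filter islow (nth [::] cs j)); last first.
  apply: eq_in_filter => l hl; move: (cs_mem hl); case: (islow l).
  - by case/Lc_mem.
  - by case/Xc_mem => _ /negbTE ->.
have e := (elimT (@subseq_uniqP _ _ _ (Lc_uniq j)) sub).
rewrite [in RHS]e; apply: eq_in_filter => l hl /=.
by rewrite mem_filter (allP (Lc_low j) l hl).
Qed.

Lemma char_vj_w : char vj w.
Proof.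
split.
- move=> l ll lw; apply: s0_vj; rewrite mem_s0 lw andbT.
  by case: huw => h1 _ _; apply: h1.
- move=> l ll lv; case Pl: (P0 l); first by move: Pl; rewrite /P0 mem_s0 => /andP [].
  case: (vj_mem lv (negbT Pl)) => i /cs_mem; rewrite (negbTE ll); by case/Xc_mem.
apply: (splitP_inj (P := P0)).
  rewrite filterC filter_vj filterC filter_P0_w.
  have e1 : filter [in vj] s0 = s0 by apply/all_filterP/allP => l; apply: s0_vj.
  have e2 : filter [in w] s0 = s0.
    by apply/all_filterP/allP => l; rewrite mem_s0 => /andP [].
  by rewrite e1 e2.
rewrite !splitP_filter; last first.
1,2: by move=> l _ hp; first [exact: (s0_vj hp) | by move: hp; rewrite /P0 mem_s0 => /andP []].
rewrite split_vj; apply: (@eq_from_nth _ [::]); first by rewrite !size_map /cw size_splitP -size_filter filter_P0_w hsz.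
move=> j; rewrite size_map hsz => hj.
rewrite !nth_map_filter.
have [_ _ _ sub] := hval (Ordinal hj).
transitivity (filter (predC islow) (nth [::] cs j)).
  apply: eq_in_filter => l hl; move: (cs_mem hl); case hl': (islow l) => /=.
  - by case/Lc_mem => _ /negbTE ->; rewrite hl'.
  - by case/Xc_mem => ->; rewrite hl'.
symmetry; transitivity (filter [in nth [::] cs j] (Xc j)).
  apply: eq_in_filter => l hl; apply/idP/idP; last exact: vj_cs.
  move=> lv; case: (Xc_mem hl) => _ nu ll.
  have np : ~~ P0 l by rewrite /P0 mem_s0 (negbTE nu).
  case: (vj_mem lv np) => i H; move: (cs_mem H); rewrite (negbTE ll) => hi.
  by rewrite -(Xc_disj hi hl).
have e := (elimT (@subseq_uniqP _ _ _ (Xc_uniq j)) sub).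
rewrite [in RHS]e; apply: eq_in_filter => l hl /=.
by rewrite mem_filter (allP (Xc_up j) l hl).
Qed.

Lemma shuffle_vj : is_shuffle vj.
Proof. exact: shuffle_between (valP uW) (valP wW) uniq_vj char_u_vj char_vj_w. Qed.
End Construct.

Definition Itv := {v : W M N | shuffle_le uW v /\ shuffle_le v wW}.

Lemma inI_of (x : Itv) : inI (val (sval x)).
Proof.
case: x => v [h1 h2] /=; split.
- by case/and3P: (valP v).
- exact: le_char h1.
- exact: le_char h2.
Qed.

Definition Ms (i : 'I_k) := size (Lc i).
Definition Ns (i : 'I_k) := size (Xc i).

Definition fI (x : Itv) (i : 'I_k) : W (Ms i) (Ns i) :=
  exist (fun y => is_shuffle y) (pmap (enc (Lc i) (Xc i)) (nth [::] (cv (val (sval x))) i))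
    (enc_shuffle (Lc_uniq i) (Xc_uniq i) (Lc_low i) (Xc_up i) (cv_valid (inI_of x) i)).

Definition csy (y : forall i : 'I_k, W (Ms i) (Ns i)) : seq (seq Lt) :=
  map (fun i : 'I_k => map (@dec M N (Lc i) (Xc i)) (val (y i))) (enum 'I_k).

Lemma size_csy y : size (csy y) = k.
Proof. by rewrite size_map size_enum_ord. Qed.

Lemma nth_csy y (i : 'I_k) : nth [::] (csy y) i = map (@dec M N (Lc i) (Xc i)) (val (y i)).
Proof. exact: (nth_map_enum [::] (fun i : 'I_k => map (@dec M N (Lc i) (Xc i)) (val (y i))) i). Qed.

Lemma valid_csy y (i : 'I_k) : valid (Lc i) (Xc i) (nth [::] (csy y) i).
Proof. rewrite nth_csy; exact: (dec_valid (Lc_uniq i) (Xc_uniq i) (Lc_low i) (Xc_up i) (valP (y i))). Qed.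

Definition gW (y : forall i : 'I_k, W (Ms i) (Ns i)) : W M N :=
  exist (fun v => is_shuffle v) (vj (csy y)) (shuffle_vj (size_csy y) (valid_csy y)).

Definition gI (y : forall i : 'I_k, W (Ms i) (Ns i)) : Itv :=
  exist _ (gW y)
    (conj (@char_le M N uW (gW y) (char_u_vj (size_csy y) (valid_csy y)))
          (@char_le M N (gW y) wW (char_vj_w (size_csy y) (valid_csy y)))).

Lemma Itv_eq (x y : Itv) : val (sval x) = val (sval y) -> x = y.
Proof.
case: x => [[v hv] px]; case: y => [[v' hv'] py] /= e; subst v'.
have e : hv = hv' by apply: eq_irrelevance.
subst hv'; congr exist; apply: proof_irrelevance.
Qed.

Lemma fIK : cancel fI gI.
Proof.
move=> x; apply: Itv_eq => /=; rewrite /vj /csy.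
have hx := inI_of x.
transitivity (join s0 (map (fun i : 'I_k => nth [::] (cv (val (sval x))) i) (enum 'I_k))).
  congr join; apply: eq_map => i /=.
  by apply: (map_dec_enc (Lc_low i) (Xc_up i)); case: (cv_valid hx i).
by rewrite map_nth_enum ?(size_cv hx) // -{1}(filter_P0_v hx) join_splitP.
Qed.

Lemma gIK : cancel gI fI.
Proof.
move=> y; apply: functional_extensionality_dep => i; apply: val_inj => /=.
rewrite /cv split_vj ?size_csy //; last exact: valid_csy.
by rewrite nth_csy pmap_enc_dec // ?Lc_uniq ?Xc_uniq ?Lc_low ?Xc_up.
Qed.

Lemma fI_mono (x y : Itv) :
  shuffle_le (sval x) (sval y) <-> (forall p : 'I_k, shuffle_le (fI x p) (fI y p)).
Proof.
have hx := inI_of x; have hy := inI_of y.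
have key : forall i : 'I_k, char (nth [::] (cv (val (sval x))) i) (nth [::] (cv (val (sval y))) i)
   <-> shuffle_le (fI x i) (fI y i).
  move=> i.
  set cx := nth [::] (cv (val (sval x))) i; set cy := nth [::] (cv (val (sval y))) i.
  have e1 : map (@dec M N (Lc i) (Xc i)) (pmap (enc (Lc i) (Xc i)) cx) = cx.
    by apply: (map_dec_enc (Lc_low i) (Xc_up i)); case: (cv_valid hx i).
  have e2 : map (@dec M N (Lc i) (Xc i)) (pmap (enc (Lc i) (Xc i)) cy) = cy.
    by apply: (map_dec_enc (Lc_low i) (Xc_up i)); case: (cv_valid hy i).
  have hd := char_dec (Lc_uniq i) (Xc_uniq i) (Lc_low i) (Xc_up i)
    (pmap (enc (Lc i) (Xc i)) cx) (pmap (enc (Lc i) (Xc i)) cy).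
  rewrite e1 e2 in hd.
  split => h.
  - apply: char_le; exact: (proj1 hd h).
  - apply: (proj2 hd); exact: (le_char h).
split => h.
- move=> i; apply: (proj1 (key i)); exact: (proj1 (char_comp hx hy) (le_char h) i).
- apply: char_le; apply: (proj2 (char_comp hx hy)) => i; apply: (proj2 (key i)); exact: h.
Qed.
End Main.

Theorem lemma2p2 (M N : nat) (u w : W M N) (huw : shuffle_le u w) :
  exists (k : nat) (Ms Ns : 'I_k -> nat), 0 < k /\
    exists f : {v : W M N | shuffle_le u v /\ shuffle_le v w} ->
               (forall p : 'I_k, W (Ms p) (Ns p)),
      bijective f /\
      (forall x y, shuffle_le (sval x) (sval y) <->
                   (forall p : 'I_k, shuffle_le (f x p) (f y p))).
Proof.
have hc := le_char huw.
exists (k u w), (@Ms M N u w), (@Ns M N u w); split; first by [].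
exists (@fI M N u w hc); split.
- by exists (@gI M N u w hc); [exact: fIK | exact: gIK].
- exact: fI_mono.
Qed.
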